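(* $\gamma^{L-ID}(\mathcal{H})=\frac38$: every local identifying code in the hexagonal grid has density at least $3/8$, and there is a local identifying code in the hexagonal grid of density $3/8$.
   Context: The hexagonal grid $\mathcal{H}$ has vertex set $\mathbb{Z}^2$, with $\mathbf{u}=(i,j)$ and $\mathbf{v}$ adjacent iff $\mathbf{u}-\mathbf{v}\in\{(\pm1,0),(0,(-1)^{i+j+1})\}$. For a nonempty $C\subseteq\mathbb{Z}^2$ and vertex $\mathbf{u}$, $I(\mathbf{u})=N[\mathbf{u}]\cap C$ where $N[\mathbf{u}]$ is the closed neighbourhood. $C$ is a local identifying code if $I(\mathbf{u})\ne\emptyset$ for all $\mathbf{u}$ and $I(\mathbf{u})\ne I(\mathbf{v})$ for all adjacent $\mathbf{u},\mathbf{v}$. The density of $C$ is $D(C)=\limsup_{n\to\infty}|C\cap Q_n|/|Q_n|$ with $Q_n=\{(i,j)\in\mathbb{Z}^2:|i|\le n,|j|\le n\}$. $\gamma^{L-ID}(G)$ denotes the smallest density of a local identifying code in $G$. *)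

(* Defs.v *)
From mathcomp Require Import all_boot all_order all_algebra.
From mathcomp Require Import all_classical all_reals all_analysis.
Set Implicit Arguments. Unset Strict Implicit. Unset Printing Implicit Defensive.
Import Order.TTheory GRing.Theory Num.Theory.
Local Open Scope classical_set_scope.
Local Open Scope ring_scope.

Definition vertex := (int * int)%type.

Definition hex_adj (u v : vertex) : Prop :=
  let d := (u.1 - v.1, u.2 - v.2) in
  d = (1, 0) \/ d = (-1, 0) \/ d = (0, (-1 : int) ^ (u.1 + u.2 + 1)).

Definition closed_nbhd (u : vertex) : set vertex := [set v | v = u \/ hex_adj u v].

Definition Iset (C : set vertex) (u : vertex) : set vertex := closed_nbhd u `&` C.

Definition local_identifying_code (C : set vertex) : Prop :=
  C !=set0 /\
  (forall u, Iset C u !=set0) /\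
  (forall u v, hex_adj u v -> Iset C u <> Iset C v).

Definition count_in_box (C : set vertex) (n : nat) : nat :=
  (\sum_(i < (2 * n).+1) \sum_(j < (2 * n).+1)
     (((i%:Z - n%:Z)%R, (j%:Z - n%:Z)%R) \in C : nat))%N.

Definition box_size (n : nat) : nat := ((2 * n).+1 ^ 2)%N.

Definition density (R : realType) (C : set vertex) : \bar R :=
  limn_esup (fun n => ((count_in_box C n)%:R / (box_size n)%:R : R)%:E).

(* Main.v *)
Require Import Defs.
From mathcomp Require Import all_boot all_order all_algebra zify ring lra.
From mathcomp Require Import all_classical all_reals all_analysis.
Import Order.TTheory GRing.Theory Num.Theory.
Import numFieldNormedType.Exports.
Local Open Scope classical_set_scope.
Local Open Scope ring_scope.


Definition sg (u : vertex) : int := (-1 : int) ^ (u.1 + u.2 + 1).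
Definition pl (u : vertex) : vertex := (u.1 + 1, u.2).
Definition mi (u : vertex) : vertex := (u.1 - 1, u.2).
Definition vert (u : vertex) : vertex := (u.1, u.2 - sg u).

Lemma m1_pm (z : int) : (-1 : int) ^ z = 1 \/ (-1 : int) ^ z = -1.
Proof.
case: z => n; rewrite /exprz -signr_odd; case: odd; rewrite ?invr1 ?invrN1; auto.
Qed.
Lemma sg_pm u : sg u = 1 \/ sg u = -1.
Proof. exact: m1_pm. Qed.

Lemma sg_shift u k : (k = 1 \/ k = -1) -> (-1 : int) ^ (u + k) = - (-1) ^ u.
Proof.
move=> hk; rewrite exprzDr ?unitrN1 //.
have e : (-1 : int) ^ (-1 : int) = -1 by [].
by case: hk => ->; rewrite ?expr1z ?e mulrN1.
Qed.

Lemma sg_vert u : sg (vert u) = - sg u.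
Proof.
rewrite /sg /=.
have -> : u.1 + (u.2 - (-1) ^ (u.1 + u.2 + 1)) + 1 =
   (u.1 + u.2 + 1) + (- (-1) ^ (u.1 + u.2 + 1)) by lia.
by rewrite sg_shift //; case: (m1_pm (u.1 + u.2 + 1)) => ->; auto.
Qed.

Lemma vertK u : vert (vert u) = u.
Proof. by rewrite {1}/vert sg_vert /vert /= opprK subrK; case: u. Qed.
Lemma plK u : mi (pl u) = u.
Proof. by rewrite /mi /pl /= addrK; case: u. Qed.
Lemma miK u : pl (mi u) = u.
Proof. by rewrite /mi /pl /= subrK; case: u. Qed.

Lemma adjE u v : hex_adj u v <-> v = pl u \/ v = mi u \/ v = vert u.
Proof.
case: u v => [a b] [c d]; rewrite /hex_adj /pl /mi /vert /sg /=.
set s := (-1 : int) ^ _.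
split.
- case=> [[e1 e2]|[[e1 e2]|[e1 e2]]].
  + by right; left; congr pair; lia.
  + by left; congr pair; lia.
  + by right; right; congr pair; lia.
- case=> [[e1 e2]|[[e1 e2]|[e1 e2]]].
  + by right; left; congr pair; lia.
  + by left; congr pair; lia.
  + by right; right; congr pair; lia.
Qed.

Lemma nbhdE u w : closed_nbhd u w <-> w = u \/ w = pl u \/ w = mi u \/ w = vert u.
Proof. by rewrite /closed_nbhd /= adjE. Qed.

Definition m (C : set vertex) (u : vertex) : bool := u \in C.

Lemma mP C u : m C u <-> C u.
Proof. by rewrite /m; split => [/set_mem|/mem_set]. Qed.

Arguments m : simpl never.
Lemma mT C x : C x -> m C x.
Proof. by move/mP. Qed.
Arguments mT {C x}.

Lemma iset_neq C u v w : C w -> closed_nbhd u w -> ~ closed_nbhd v w ->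
  Iset C u <> Iset C v.
Proof. by move=> Cw Nu Nv E; apply: Nv; have : Iset C u w by []; rewrite E => -[]. Qed.

Lemma iset_neq' C u v w : C w -> ~ closed_nbhd u w -> closed_nbhd v w ->
  Iset C u <> Iset C v.
Proof. by move=> Cw Nu Nv E; apply: Nu; have : Iset C v w by []; rewrite -E => -[]. Qed.

Lemma iset_eq C u v :
  (forall w, C w -> closed_nbhd u w -> closed_nbhd v w) ->
  (forall w, C w -> closed_nbhd v w -> closed_nbhd u w) ->
  Iset C u = Iset C v.
Proof.
move=> h1 h2; apply/seteqP; split => w [Nw Cw]; split => //; by [apply: h1|apply: h2].
Qed.

Ltac nbtac := repeat (match goal with
  | H : _ \/ _ |- _ => case: H => H
  end); subst.

Ltac orref := first [left; reflexivity | right; left; reflexivity | right; right; left; reflexivity | right; right; right; reflexivity].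

Lemma edge_pl C u : Iset C u <> Iset C (pl u) <->
  [|| m C (mi u), m C (vert u), m C (pl (pl u)) | m C (vert (pl u))].
Proof.
split.
- move=> H; apply: contrapT => nH; apply: H.
  apply: iset_eq => w Cw /nbhdE Nw; apply/nbhdE; nbtac;
   rewrite ?plK; try by [auto | case: nH; rewrite (mT Cw) ?orbT].
- have := sg_pm u; have := sg_pm (pl u).
  case: u => a b; rewrite /pl /mi /vert /=.
  move=> s1 s2 /or4P[] /mP h;
    [apply: iset_neq h _ _|apply: iset_neq h _ _|apply: iset_neq' h _ _|apply: iset_neq' h _ _];
    rewrite ?nbhdE /pl /mi /vert /=; try (by orref);
    case=> [[]|[[]|[[]|[]]]]; lia.
Qed.

Lemma edge_mi C u : Iset C u <> Iset C (mi u) <->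
  [|| m C (pl u), m C (vert u), m C (mi (mi u)) | m C (vert (mi u))].
Proof.
split.
- move=> H; apply: contrapT => nH; apply: H.
  apply: iset_eq => w Cw /nbhdE Nw; apply/nbhdE; nbtac;
   rewrite ?miK; try by [auto | case: nH; rewrite (mT Cw) ?orbT].
- have := sg_pm u; have := sg_pm (mi u).
  case: u => a b; rewrite /pl /mi /vert /=.
  move=> s1 s2 /or4P[] /mP h;
    [apply: iset_neq h _ _|apply: iset_neq h _ _|apply: iset_neq' h _ _|apply: iset_neq' h _ _];
    rewrite ?nbhdE /pl /mi /vert /=; try (by orref);
    case=> [[]|[[]|[[]|[]]]]; lia.
Qed.

Lemma edge_vert C u : Iset C u <> Iset C (vert u) <->
  [|| m C (pl u), m C (mi u), m C (pl (vert u)) | m C (mi (vert u))].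
Proof.
split.
- move=> H; apply: contrapT => nH; apply: H.
  apply: iset_eq => w Cw /nbhdE Nw; apply/nbhdE; nbtac;
   rewrite ?vertK; try by [auto | case: nH; rewrite (mT Cw) ?orbT].
- have := sg_pm u; have := sg_vert u.
  case: u => a b; rewrite /pl /mi /vert /=.
  move=> s1 s2 /or4P[] /mP h;
    [apply: iset_neq h _ _|apply: iset_neq h _ _|apply: iset_neq' h _ _|apply: iset_neq' h _ _];
    rewrite ?nbhdE /pl /mi /vert /=; try (by orref);
    case=> [[]|[[]|[[]|[]]]]; lia.
Qed.

Lemma dom_iff C u : Iset C u !=set0 <-> [|| m C u, m C (pl u), m C (mi u) | m C (vert u)].
Proof.
split.
- case=> w [/nbhdE Nw Cw]; nbtac; by rewrite (mT Cw) ?orbT.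
- case/or4P => /mP h; [exists u|exists (pl u)|exists (mi u)|exists (vert u)];
  split => //; apply/nbhdE; orref.
Qed.


Definition f C u : nat := (m C u + m C (pl u) + m C (mi u) + m C (vert u))%N.
Definition aa (b : bool) (k : nat) : nat := if b && (k == 2)%N then 4 else (12 %/ k)%N.
Definition bb (b : bool) (k : nat) : nat := if b && (k == 2)%N then 8 else (12 %/ k)%N.

Definition hsum C u : nat :=
  (m C u * aa (m C u) (f C u) + m C (pl u) * bb (m C u) (f C u)
   + m C (mi u) * bb (m C u) (f C u) + m C (vert u) * bb (m C u) (f C u))%N.

Lemma h12 C u : (0 < f C u)%N -> hsum C u = 12%N.
Proof.
rewrite /hsum /f.
by case: (m C u); case: (m C (pl u)); case: (m C (mi u)); case: (m C (vert u)).
Qed.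

Definition G1 C c : nat := (m C c * aa (m C c) (f C c))%N.
Definition G2 C c : nat := (m C c * bb (m C (mi c)) (f C (mi c)))%N.
Definition G3 C c : nat := (m C c * bb (m C (pl c)) (f C (pl c)))%N.
Definition G4 C c : nat := (m C c * bb (m C (vert c)) (f C (vert c)))%N.

Lemma hsumE C u : hsum C u = (G1 C u + G2 C (pl u) + G3 C (mi u) + G4 C (vert u))%N.
Proof. by rewrite /hsum /G1 /G2 /G3 /G4 plK miK vertK. Qed.

Lemma share_le C c : local_identifying_code C ->
  (G1 C c + G2 C c + G3 C c + G4 C c <= 32 * m C c)%N.
Proof.
case=> _ [_ hE].
have e1 := proj1 (edge_pl C c) (hE _ _ (proj2 (adjE _ _) (or_introl erefl))).
have e2 := proj1 (edge_mi C c) (hE _ _ (proj2 (adjE _ _) (or_intror (or_introl erefl)))).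
have e3 := proj1 (edge_vert C c) (hE _ _ (proj2 (adjE _ _) (or_intror (or_intror erefl)))).
move: e1 e2 e3; rewrite /G1 /G2 /G3 /G4 /f plK miK vertK.
case: (m C (pl (pl c))); case: (m C (vert (pl c)));
case: (m C (mi (mi c))); case: (m C (vert (mi c)));
case: (m C (pl (vert c))); case: (m C (mi (vert c)));
case: (m C c); case: (m C (pl c)); case: (m C (mi c)); case: (m C (vert c)) => //.
Qed.


Definition boxl (n : nat) : seq vertex :=
  [seq (i%:Z - n%:Z, j%:Z - n%:Z) | i <- index_iota 0 (2 * n).+1, j <- index_iota 0 (2 * n).+1].

Definition inbox (n : nat) (x : vertex) : bool :=
  (- n%:Z <= x.1 <= n%:Z) && (- n%:Z <= x.2 <= n%:Z).

Lemma count_boxl C n : count_in_box C n = (\sum_(x <- boxl n) m C x)%N.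
Proof.
rewrite /count_in_box /boxl big_allpairs_dep /= big_mkord.
by apply: eq_bigr => i _; rewrite big_mkord.
Qed.

Lemma mem_boxl n x : (x \in boxl n) = inbox n x.
Proof.
apply/allpairsP/idP.
- case=> -[i j] /= []; rewrite !mem_index_iota => hi hj ->; rewrite /inbox /=.
  apply/andP; split; apply/andP; split; lia.
- case: x => a b; rewrite /inbox /= => /andP[/andP[h1 h2] /andP[h3 h4]].
  exists (absz (a + n%:Z), absz (b + n%:Z)); rewrite /= !mem_index_iota.
  split; [lia|lia|congr pair; lia].
Qed.

Lemma uniq_boxl n : uniq (boxl n).
Proof.
apply: allpairs_uniq; rewrite ?iota_uniq //.
move=> [i j] [i' j'] _ _ /= [e1 e2]; congr pair; lia.
Qed.

Lemma size_boxl n : size (boxl n) = ((2 * n).+1 ^ 2)%N.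
Proof. by rewrite size_allpairs size_iota subn0 expnS expn1. Qed.

Lemma sum_subset (F : vertex -> nat) (s t : seq vertex) :
  uniq s -> uniq t -> {subset s <= t} ->
  (\sum_(x <- s) F x <= \sum_(x <- t) F x)%N.
Proof.
move=> us ut sst.
rewrite [X in (_ <= X)%N](bigID (fun x => x \in s)) /=.
have -> : (\sum_(x <- t | x \in s) F x = \sum_(x <- s) F x)%N.
  rewrite -big_filter; apply: perm_big; apply: uniq_perm; rewrite ?filter_uniq //.
  by move=> x; rewrite mem_filter; case xs: (x \in s) => //=; rewrite sst.
exact: leq_addr.
Qed.

Lemma sum_inj (F : vertex -> nat) (g : vertex -> vertex) n :
  injective g -> (forall x, inbox n x -> inbox n.+1 (g x)) ->
  (\sum_(x <- boxl n) F (g x) <= \sum_(x <- boxl n.+1) F x)%N.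
Proof.
move=> gi gb; rewrite -(big_map g xpredT F).
apply: sum_subset; rewrite ?uniq_boxl ?map_inj_uniq ?uniq_boxl //.
move=> y /mapP[x xb ->]; rewrite mem_boxl; apply: gb; by rewrite -mem_boxl.
Qed.

Lemma inbox_pl n x : inbox n x -> inbox n.+1 (pl x).
Proof. rewrite /inbox /pl /= => /andP[/andP[h1 h2] /andP[h3 h4]]; apply/andP; split; apply/andP; split; lia. Qed.
Lemma inbox_mi n x : inbox n x -> inbox n.+1 (mi x).
Proof. rewrite /inbox /mi /= => /andP[/andP[h1 h2] /andP[h3 h4]]; apply/andP; split; apply/andP; split; lia. Qed.
Lemma inbox_vert n x : inbox n x -> inbox n.+1 (vert x).
Proof.
have := sg_pm x.
rewrite /inbox /vert /= => s /andP[/andP[h1 h2] /andP[h3 h4]]; apply/andP; split; apply/andP; split; lia.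
Qed.
Lemma inbox_id n x : inbox n x -> inbox n.+1 x.
Proof. rewrite /inbox => /andP[/andP[h1 h2] /andP[h3 h4]]; apply/andP; split; apply/andP; split; lia. Qed.

Lemma inj_pl : injective pl. Proof. exact: (can_inj plK). Qed.
Lemma inj_mi : injective mi. Proof. exact: (can_inj miK). Qed.
Lemma inj_vert : injective vert. Proof. exact: (can_inj vertK). Qed.

Lemma lower_count C n : local_identifying_code C ->
  (12 * (2 * n).+1 ^ 2 <= 32 * count_in_box C n.+1)%N.
Proof.
move=> lic; have [_ [hD _]] := lic.
rewrite -size_boxl count_boxl.
have -> : (12 * size (boxl n) = \sum_(x <- boxl n) hsum C x)%N.
  rewrite (eq_bigr (fun=> 12%N)); last first.
    move=> x _; apply: h12; have := proj1 (dom_iff C x) (hD x).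
    by rewrite /f; case/or4P => ->; rewrite ?addnS.
  by rewrite big_const_seq count_predT iter_addn_0 mulnC.
under eq_bigr do rewrite hsumE.
rewrite [X in (_ <= X)%N]big_distrr.
apply: (@leq_trans (\sum_(x <- boxl n.+1) (G1 C x + G2 C x + G3 C x + G4 C x))%N); last first.
  by apply: leq_sum => x _; apply: share_le.
rewrite !big_split.
apply: leq_add; [apply: leq_add; [apply: leq_add|]|].
- exact: (sum_inj (G1 C) id n (@inj_id _) (@inbox_id n)).
- exact: (sum_inj (G2 C) pl n inj_pl (@inbox_pl n)).
- exact: (sum_inj (G3 C) mi n inj_mi (@inbox_mi n)).
- exact: (sum_inj (G4 C) vert n inj_vert (@inbox_vert n)).
Qed.


Definition key (p : vertex) : int := ((p.1 + 4 * p.2) %% 8)%Z.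
Definition C0 : set vertex := [set p | key p < 3].

Lemma mC0 p : m C0 p = (key p < 3).
Proof. by apply/idP/idP => [/mP|h]; [|apply/mP]. Qed.

Lemma key_pl u : key (pl u) = ((key u + 1) %% 8)%Z.
Proof. by rewrite /key modzDml /pl /=; congr (_ %% _)%Z; lia. Qed.
Lemma key_mi u : key (mi u) = ((key u + 7) %% 8)%Z.
Proof.
rewrite /key modzDml /mi /=.
by rewrite (_ : u.1 + 4 * u.2 + 7 = 1 * 8 + (u.1 - 1 + 4 * u.2)) ?modzMDl //; lia.
Qed.
Lemma key_vert u : key (vert u) = ((key u + 4) %% 8)%Z.
Proof.
rewrite /key modzDml /vert /=.
case: (sg_pm u) => ->.
  by rewrite (_ : u.1 + 4 * u.2 + 4 = 1 * 8 + (u.1 + 4 * (u.2 - 1))) ?modzMDl //; lia.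
by rewrite (_ : u.1 + 4 * u.2 + 4 = 0 * 8 + (u.1 + 4 * (u.2 - -1))) ?modzMDl //; lia.
Qed.

Lemma key_range u : exists2 k : nat, (k < 8)%N & key u = k%:Z.
Proof.
exists (absz (key u)); last by rewrite gez0_abs // modz_ge0.
have := ltz_pmod (u.1 + 4 * u.2) (isT : 0 < 8 :> int); rewrite -/(key u).
have := modz_ge0 (u.1 + 4 * u.2) (isT : 8 != 0 :> int); rewrite -/(key u).
lia.
Qed.

Lemma C0_code : local_identifying_code C0.
Proof.
split; first by exists (0, 0); rewrite /C0 /key /=.
split.
  move=> u; apply/dom_iff; rewrite !mC0 !key_pl !key_mi !key_vert.
  by case: (key_range u) => k hk ->; do 8?[case: k hk => [|k] hk //].
move=> u v /adjE [->|[->|->]].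
- apply/edge_pl; rewrite !mC0 !key_pl !key_mi !key_vert !key_pl.
  by case: (key_range u) => k hk ->; do 8?[case: k hk => [|k] hk //].
- apply/edge_mi; rewrite !mC0 !key_pl !key_mi !key_vert !key_mi.
  by case: (key_range u) => k hk ->; do 8?[case: k hk => [|k] hk //].
- apply/edge_vert; rewrite !mC0 !key_pl !key_mi !key_vert.
  by case: (key_range u) => k hk ->; do 8?[case: k hk => [|k] hk //].
Qed.


Definition P8 (z : int) : nat := nat_of_bool ((z %% 8)%Z < 3)%R.

Lemma blk b : (\sum_(0 <= i < 8) P8 (i%:Z + b) = 3)%N.
Proof.
have -> : (\sum_(0 <= i < 8) P8 (i%:Z + b) = \sum_(0 <= i < 8) P8 (i%:Z + (b %% 8)%Z))%N.
  by apply: eq_bigr => i _; rewrite /P8 modzDmr.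
have [k hk ->] : exists2 k : nat, (k < 8)%N & (b %% 8)%Z = k%:Z.
  exists (absz (b %% 8)%Z); last by rewrite gez0_abs // modz_ge0.
  have := ltz_pmod b (isT : 0 < 8 :> int).
  have := modz_ge0 b (isT : 8 != 0 :> int). lia.
by do 8?[case: k hk => [|k] hk //]; rewrite unlock.
Qed.

Lemma blkq q b : (\sum_(0 <= i < 8 * q) P8 (i%:Z + b) = 3 * q)%N.
Proof.
elim: q => [|q IH]; first by rewrite muln0 big_geq.
rewrite (big_cat_nat (n := 8 * q)); last by rewrite leq_mul2l leqnSn orbT. 2: by [].
rewrite IH (big_addn 0 _ (8 * q)).
have -> : (8 * q.+1 - 8 * q = 8)%N by rewrite mulnS addnK.
rewrite (eq_bigr (fun i => P8 (i%:Z + (b + (8 * q)%:Z)))); last by move=> i _; congr P8; lia.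
by rewrite blk mulnS addnC.
Qed.

Lemma row_le a L : (8 * \sum_(i < L) P8 (i%:Z + a) <= 3 * L + 24)%N.
Proof.
rewrite -(big_mkord xpredT (fun i : nat => P8 (i%:Z + a))).
set q := (L %/ 8)%N.
have hL : (L <= 8 * q.+1)%N by rewrite /q; have := ltn_ceil L (isT : 0 < 8)%N; lia.
apply: (@leq_trans (8 * \sum_(0 <= i < 8 * q.+1) P8 (i%:Z + a))).
  rewrite leq_mul2l /= [X in (_ <= X)%N](big_cat_nat (n := L)) //; exact: leq_addr.
rewrite blkq.
have := leq_trunc_div L 8; rewrite -/q; lia.
Qed.

Lemma inC0 p : (p \in C0) = (key p < 3).
Proof. exact: mC0. Qed.

Lemma count_C0_le n :
  (8 * count_in_box C0 n <= (2 * n).+1 * (3 * (2 * n).+1 + 24))%N.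
Proof.
rewrite /count_in_box exchange_big big_distrr.
apply: (@leq_trans (\sum_(j < (2 * n).+1) (3 * (2 * n).+1 + 24))%N); last first.
  by rewrite sum_nat_const card_ord.
apply: leq_sum => j _.
rewrite (eq_bigr (fun i : 'I_(2 * n).+1 => P8 (i%:Z + (4 * (j%:Z - n%:Z) - n%:Z)))).
  exact: row_le.
by move=> i _; rewrite inC0 /key /P8 /=; congr (nat_of_bool (_ < 3)); congr (_ %% _)%Z; lia.
Qed.


Section An.
Variable R : realType.

Lemma esup_mono (u v : (\bar R)^nat) : (forall n, (u n <= v n)%E) ->
  (limn_esup u <= limn_esup v)%E.
Proof.
move=> uv; rewrite !limn_esup_lim; apply: lee_lim; [exact: is_cvg_esups|exact: is_cvg_esups|].
apply: nearW => n; apply: ge_ereal_sup => _ [k /= nk <-].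
apply: (le_trans (uv k)); apply: ereal_sup_ubound; by exists k.
Qed.

Lemma esup_h (a b : R) : limn_esup (fun n => (a + b * harmonic n)%:E) = a%:E.
Proof.
have hc : (fun n => a + b * harmonic n) @ \oo --> a.
  rewrite -[X in _ --> X]addr0 -[X in _ --> _ + X](mulr0 b).
  apply: cvgD; [exact: cvg_cst | exact: cvgMl_tmp (@cvg_harmonic R)].
apply: (cvg_limn_einf_sup _).2; apply: cvg_EFin; first by apply: nearW.
exact: hc.
Qed.

Lemma ineq_low (x c : R) : 0 <= x -> 12 * (2 * x + 1) ^+ 2 <= 32 * c ->
  3 / 8 + (-2) * (x + 2)^-1 <= c / (2 * x + 3) ^+ 2.
Proof.
move=> x0 hc.
have hd : 0 < (2 * x + 3) ^+ 2 by apply: exprn_gt0; lra.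
rewrite ler_pdivlMr //.
set h := (x + 2)^-1.
have h1 : h * (x + 2) = 1 by rewrite mulVf //; lra.
have h0 : 0 < h by rewrite invr_gt0; lra.
have key : 3 * (x + 1) * (x + 2) <= 2 * (2 * x + 3) ^+ 2 by nra.
have : 3 * (x + 1) <= 2 * (2 * x + 3) ^+ 2 * h.
  have e : 3 * (x + 1) = 3 * (x + 1) * (x + 2) * h by rewrite -mulrA (mulrC (x + 2)) h1 mulr1.
  by rewrite {1}e; apply: ler_wpM2r => //; apply: ltW.
nra.
Qed.

Lemma ineq_up (L x c : R) : 0 <= x -> x + 1 <= L -> 8 * c <= L * (3 * L + 24) ->
  c / L ^+ 2 <= 3 / 8 + 3 * (x + 1)^-1.
Proof.
move=> x0 xL hc.
have L0 : 0 < L by lra.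
rewrite ler_pdivrMr ?exprn_gt0 //.
have h0 : 0 < (x + 1)^-1 by rewrite invr_gt0; lra.
have h1 : (x + 1) * (x + 1)^-1 = 1 by rewrite mulfV //; lra.
have : 1 <= L * (x + 1)^-1.
  by rewrite -[X in X <= _]h1; apply: ler_wpM2r => //; apply: ltW.
nra.
Qed.

End An.


Lemma part1 (R : realType) (C : set vertex) : local_identifying_code C ->
     ((3 / 8 : R)%:E <= density R C)%E.
Proof.
move=> lic; rewrite /density.
apply: (le_trans _ (@esup_mono R (fun n => ((3/8 : R) + (-2) * harmonic n)%:E) _ _)).
  by rewrite esup_h.
move=> n; rewrite lee_fin /harmonic /=.
case: n => [|k].
  have : 0 <= (count_in_box C 0)%:R / (box_size 0)%:R :> R by apply: divr_ge0.
  rewrite invr1; lra.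
have := lower_count C k lic; rewrite -(ler_nat R) !natrM -expr2 => hc.
rewrite /box_size ?natrX ?natrM -?expr2.
have -> : ((2 * k.+1).+1%:R : R) = 2 * k%:R + 3.
  have e : ((2 * k.+1).+1 = 2 * k + 3)%N by lia.
  by rewrite e natrD natrM.
rewrite -[k.+2]addn2 natrD.
apply: ineq_low => //.
have e2 : ((2 * k).+1 = 2 * k + 1)%N by lia.
by move: hc; rewrite e2 natrD natrM.
Qed.

Theorem mainTheorem14 (R : realType) :
  (forall C : set vertex, local_identifying_code C ->
     ((3 / 8 : R)%:E <= density R C)%E) /\
  (exists C : set vertex, local_identifying_code C /\
     density R C = (3 / 8 : R)%:E).
Proof.
split; first exact: part1.
exists C0; split; first exact: C0_code.
apply: le_anti; rewrite (part1 R C0 C0_code) andbT.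
apply: (le_trans (@esup_mono R _ (fun n => ((3/8 : R) + 3 * harmonic n)%:E) _)); last first.
  by rewrite esup_h.
move=> n; rewrite lee_fin /harmonic /=.
have := count_C0_le n; rewrite -(ler_nat R) !natrM !natrD => hc.
rewrite /box_size ?natrX ?natrM -?expr2.
have -> : (n.+1%:R : R) = n%:R + 1 by rewrite -addn1 natrD.
apply: (@ineq_up R ((2 * n).+1)%:R) => //.
  by rewrite natr1 ler_nat; lia.
by move: hc; rewrite natrM.
Qed.
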